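(* Let $n$ be a positive integer and $1\le k\le c\le \frac n2$. For every $(k,k)$-legal diagram $\nu$ (a partition with exactly $k$ parts), the Schur polynomial $S_\nu$ is a linear combination, with integer coefficients, of Schur polynomials $S_{\lambda/\mu}$ of $(k,c)$-legal diagrams $\lambda/\mu$.
   Context: Here $h_d$ ($d\ge0$) denotes the complete homogeneous symmetric polynomial of degree $d$ in $n$ variables (so $h_0=1$ and $h_1,\ldots,h_n$ are algebraically independent), and $h_d=0$ for $d<0$. For $1\le c\le n$, $A_c$ is the $(n-c+1)\times c$ matrix whose entry in row $i$, column $j$ is $h_{n-c+1-i+j}$. For a partition $\lambda$ with exactly $k$ parts and a partition $\mu$ with $\mu_i\le\lambda_i$ and $\mu_k=0$, $S_{\lambda/\mu}=\det(h_{\lambda_i-\mu_j-i+j})_{1\le i,j\le k}$ (with $S_\nu=S_{\nu/0}$), and the diagram $\lambda/\mu$ is $(k,c)$-legal if $S_{\lambda/\mu}$ equals some $k\times k$ minor of $A_c$. *)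

(* Defs.v *)
From HB Require Import structures.
From mathcomp Require Import all_boot all_order all_algebra.
From mathcomp Require Import mpoly.
Set Implicit Arguments. Unset Strict Implicit. Unset Printing Implicit Defensive.
Import Order.TTheory GRing.Theory Num.Theory.
Local Open Scope ring_scope.

Notation Poly n := {mpoly int[n]}.

Definition hcomp (n d : nat) : Poly n :=
  \sum_(m : 'X_{1..n < d.+1} | mdeg m == d) 'X_[m].

Definition hz (n : nat) (d : int) : Poly n :=
  match d with Posz d' => hcomp n d' | Negz _ => 0 end.

(* lambda is a partition with exactly k (positive) parts, lambda_1 >= ... >= lambda_k > 0;
   parts are indexed 0..k-1 via nth 0. *)
Definition partk (k : nat) (lam : seq nat) : bool :=
  [&& size lam == k, sorted geq lam & all (fun x => 0 < x)%N lam].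

Definition inner_ok (k : nat) (lam mu : seq nat) : bool :=
  [&& size mu == k, sorted geq mu,
      [forall i : 'I_k, nth 0%N mu i <= nth 0%N lam i]%N
    & nth 0%N mu k.-1 == 0%N].

Definition skewS (n k : nat) (lam mu : seq nat) : Poly n :=
  \det (\matrix_(i < k, j < k)
          hz n ((nth 0%N lam i)%:Z - (nth 0%N mu j)%:Z - (i : nat)%:Z + (j : nat)%:Z)).

(* A_c : the (n-c+1) x c matrix with (i,j) entry h_{n-c+1-i+j} (1-indexed;
   the same formula holds for 0-indexed i, j). *)
Definition Amat (n c : nat) : 'M[Poly n]_((n - c).+1, c) :=
  \matrix_(i < (n - c).+1, j < c)
     hz n ((n - c).+1%:Z - (i : nat)%:Z + (j : nat)%:Z).

Definition is_minor (R : comNzRingType) (p q k : nat) (A : 'M[R]_(p, q)) (x : R) : Prop :=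
  exists (r : 'I_k -> 'I_p) (s : 'I_k -> 'I_q),
    [/\ (forall i j : 'I_k, (i < j)%N -> (r i < r j)%N),
        (forall i j : 'I_k, (i < j)%N -> (s i < s j)%N)
      & x = \det (\matrix_(i < k, j < k) A (r i) (s j))].

Definition legal (n k c : nat) (lam mu : seq nat) : Prop :=
  [/\ partk k lam, inner_ok k lam mu & is_minor k (Amat n c) (skewS n k lam mu)].

(* Main.v *)
Require Import Defs.
From HB Require Import structures.
From mathcomp Require Import all_boot all_order all_algebra.
From mathcomp Require Import mpoly.
From mathcomp Require Import perm zify ring.
Set Implicit Arguments. Unset Strict Implicit. Unset Printing Implicit Defensive.
Import Order.TTheory GRing.Theory Num.Theory.
Local Open Scope ring_scope.

Lemma det_mix (R : comNzRingType) k (M N : 'M[R]_k) m :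
 \sum_(I : {set 'I_k} | #|I| == m) \det (\matrix_(i,j) if i \in I then N i j else M i j)
 = \sum_(J : {set 'I_k} | #|J| == m) \det (\matrix_(i,j) if j \in J then N i j else M i j).
Proof.
rewrite /determinant.
rewrite (exchange_big_dep xpredT) //= [RHS](exchange_big_dep xpredT) //=.
apply: eq_bigr => s _.
rewrite [RHS](reindex_inj (imset_inj (@perm_inj _ s))) /=.
apply: eq_big => [I|I _]; first by rewrite card_imset //; exact: perm_inj.
congr (_ * _); apply: eq_bigr => i _; rewrite !mxE mem_imset //; exact: perm_inj.
Qed.

Section S.
Variable n : nat.

Definition Hk k (R S : 'I_k -> nat) : {mpoly int[n]} :=
  \det (\matrix_(i, j) hz n ((R i + S j).+1)%:Z).

Inductive inV (k A B : nat) : {mpoly int[n]} -> Prop :=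
| inV0 : inV k A B 0
| inVc (z : int) (R S : 'I_k -> nat) p : (forall i, R i <= A)%N -> (forall j, S j <= B)%N ->
    inV k A B p -> inV k A B (z%:~R * Hk R S + p).

Lemma inV_add k A B p q : inV k A B p -> inV k A B q -> inV k A B (p + q).
Proof.
move=> Hp Hq; elim: Hp => [|z R S p' HR HS _ IH]; first by rewrite add0r.
by rewrite -addrA; apply: inVc.
Qed.

Lemma inV_scale k A B (z : int) p : inV k A B p -> inV k A B (z%:~R * p).
Proof.
elim=> [|z' R S p' HR HS _ IH]; first by rewrite mulr0; apply: inV0.
rewrite mulrDr mulrA -intrM; by apply: inVc.
Qed.

Lemma inV_opp k A B p : inV k A B p -> inV k A B (- p).
Proof. by move=> H; rewrite -mulN1r -[-1]/((-1 : int)%:~R); apply: inV_scale. Qed.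

Lemma inV_gen k A B (R S : 'I_k -> nat) : (forall i, R i <= A)%N -> (forall j, S j <= B)%N ->
  inV k A B (Hk R S).
Proof.
move=> HR HS; rewrite -[Hk R S]addr0 -[Hk R S]mul1r -[1]/((1 : int)%:~R).
by apply: inVc => //; apply: inV0.
Qed.

Lemma inV_sum k A B (I : finType) (P : pred I) (F : I -> {mpoly int[n]}) :
  (forall i, P i -> inV k A B (F i)) -> inV k A B (\sum_(i | P i) F i).
Proof.
move=> H; elim/big_rec: _ => [|i x Pi Hx]; first exact: inV0.
by apply: inV_add => //; apply: H.
Qed.


Lemma H_mix k (R S : 'I_k -> nat) m :
 \sum_(I : {set 'I_k} | #|I| == m) Hk (fun i => (R i + (i \in I))%N) S
 = \sum_(J : {set 'I_k} | #|J| == m) Hk R (fun j => (S j + (j \in J))%N).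
Proof.
have := det_mix (\matrix_(i,j) hz n ((R i + S j).+1)%:Z)
  (\matrix_(i,j) hz n ((R i + S j).+2)%:Z) m.
congr (_ = _); apply: eq_bigr => I _; rewrite /Hk; congr (\det _);
  apply/matrixP => i j; rewrite !mxE.
  by case: (i \in I) => /=; rewrite ?addn0 ?addn1 ?addSn.
by case: (j \in I) => /=; rewrite ?addn0 ?addn1 ?addnS.
Qed.


Lemma Hk_ext k (R R2 S S2 : 'I_k -> nat) : (forall i, R i = R2 i) -> (forall j, S j = S2 j) ->
  Hk R S = Hk R2 S2.
Proof.
by move=> h1 h2; rewrite /Hk; congr (\det _); apply/matrixP => i j; rewrite !mxE h1 h2.
Qed.

End S.

Lemma free_val k A (R : 'I_k -> nat) i0 : (k <= A.+1)%N -> R i0 = A.+1 ->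
  exists T, (T <= A)%N /\ forall i, R i != T.
Proof.
move=> hk h0.
case: (boolP [exists T : 'I_A.+1, [forall i, R i != T]]) => [/existsP [T /forallP HT]|].
  by exists T; split => //; rewrite -ltnS.
rewrite negb_exists => /forallP H.
have sub : [set: 'I_A.+1] \subset [set (inord (R i) : 'I_A.+1) | i in ~: [set i0]].
  apply/subsetP => T _; move: (H T); rewrite negb_forall => /existsP [i].
  rewrite negbK => /eqP Ri.
  apply/imsetP; exists i.
    rewrite !inE; apply/eqP => e; move: Ri; rewrite e h0 => e2; have := ltn_ord T; lia.
  by apply/val_inj; rewrite /= inordK Ri //.
have := leq_trans (subset_leq_card sub) (leq_imset_card _ _).
have := ltn_ord i0; rewrite cardsT cardsC1 !card_ord; lia.
Qed.

Lemma sum_ind k (X : {set 'I_k}) : (\sum_i ((i \in X) : nat))%N = #|X|.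
Proof. by rewrite -sum1_card [RHS]big_mkcond /=; apply: eq_bigr => i _; case: (i \in X). Qed.

Lemma sq_dec k (R : 'I_k -> nat) T (b I : {set 'I_k}) : (forall i, R i != T) ->
  b = [set i | T < R i]%N -> #|I| = #|b| -> I != b ->
  (\sum_i ((R i - (i \in b)) + (i \in I))^2 < \sum_i (R i)^2)%N.
Proof.
move=> hR hb hc hne.
have per : forall i, (((R i - (i \in b)) + (i \in I))^2 + (2*T+1) * (i \in b :\: I)
    <= (R i)^2 + (2*T-1) * (i \in I :\: b))%N.
  move=> i; have := hR i; rewrite !inE hb !inE.
  case: (ltnP T (R i)) => h1; case: (i \in I) => /= h2; try nia.
have := (@leq_sum _ (index_enum _) xpredT _ _ (fun i _ => per i)).
rewrite !big_split /= -!big_distrr /= !sum_ind.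
have e1 : #|b :\: I| = #|I :\: b|.
  have := cardsID I b; have := cardsID b I; rewrite setIC; lia.
have p1 : (0 < #|b :\: I|)%N.
  rewrite lt0n; apply/negP => /eqP /cards0_eq /eqP; rewrite setD_eq0 => sbI.
  move: hne; rewrite eq_sym eqEcard sbI hc leqnn //.
have T1 : (0 < T)%N.
  move: p1; rewrite e1 => /card_gt0P [i]; rewrite hb !inE => /andP [h1 _].
  have := hR i; move: h1; lia.
rewrite e1 in p1 *; nia.
Qed.


Lemma step n k A B : (k <= A.+1)%N -> forall (R S : 'I_k -> nat),
  (forall i, R i <= A.+1)%N -> (forall j, S j < B)%N -> @inV n k A B (Hk n R S).
Proof.
move=> hk.
suff H : forall N (R S : 'I_k -> nat), (\sum_i (R i)^2 < N)%N ->
  (forall i, R i <= A.+1)%N -> (forall j, S j < B)%N -> @inV n k A B (Hk n R S).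
  by move=> R S; apply: (H (\sum_i (R i)^2).+1).
elim=> [//|N IH] R S hN HR HS.
case: (boolP [forall i, R i <= A]%N) => [/forallP HA|].
  by apply: inV_gen => // j; apply: ltnW.
rewrite negb_forall => /existsP [i0]; rewrite -ltnNge => hi0.
have e0 : R i0 = A.+1 by have := HR i0; lia.
have [T [hT hR]] := free_val hk e0.
pose b := [set i | T < R i]%N.
pose R' := fun i => (R i - (i \in b))%N.
have key := H_mix n R' S #|b|.
rewrite (bigD1 b) //= in key.
have eH : Hk n (fun i => (R' i + (i \in b))%N) S = Hk n R S.
  apply: Hk_ext => // i; rewrite /R' inE.
  by case: (ltnP T (R i)) => h /=; lia.
rewrite eH in key.
have -> : Hk n R S = \sum_(J : {set 'I_k} | #|J| == #|b|) Hk n R' (fun j => (S j + (j \in J))%N)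
   - \sum_(I : {set 'I_k} | (#|I| == #|b|) && (I != b)) Hk n (fun i => (R' i + (i \in I))%N) S.
  by rewrite -key addrK.
apply: inV_add; first apply: inV_sum => J _; first apply: inV_gen.
- move=> i; rewrite /R' inE; have := HR i; have := hR i.
  by case: (ltnP T (R i)) => h /=; lia.
- by move=> j; have := HS j; case: (j \in J); lia.
apply: inV_opp; apply: inV_sum => I /andP [/eqP hI hIb].
apply: IH => //.
- have := sq_dec hR (erefl b) hI hIb; rewrite /R'; move: hN; by move=> h1 h2; apply: leq_trans h2 _; rewrite -ltnS.
- move=> i; rewrite /R' inE; have := HR i; have := hR i.
  by case: (ltnP T (R i)) => h /=; case: (i \in I); lia.
Qed.

Lemma sort_perm k (f : 'I_k -> nat) : injective f ->
  exists s : 'S_k, forall a b : 'I_k, (a < b)%N -> (f (s a) < f (s b))%N.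
Proof.
move=> finj.
have rk : forall i, (#|[set j | f j < f i]| < k)%N.
  move=> i; rewrite -[X in (_ < X)%N]card_ord; apply: proper_card; apply/properP; split.
    by apply/subsetP.
  by exists i; rewrite ?inE // ltnn.
pose rho i := Ordinal (rk i).
have mono : forall i j, (f i < f j)%N -> (rho i < rho j)%N.
  move=> i j h; rewrite /=; apply: proper_card; apply/properP; split.
    by apply/subsetP => x; rewrite !inE => hx; apply: ltn_trans hx h.
  by exists i; rewrite !inE ?h // ltnn.
have rinj : injective rho.
  move=> i j e; apply: finj.
  by case: (ltngtP (f i) (f j)) => // h; have := mono _ _ h; rewrite e ltnn.
exists (perm rinj)^-1%g => a b hab.
set i := (perm rinj)^-1%g a; set j := (perm rinj)^-1%g b.
have ea : rho i = a by rewrite /i -[rho _]permE permKV.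
have eb : rho j = b by rewrite /j -[rho _]permE permKV.
rewrite ltnNge leq_eqVlt negb_or; apply/andP; split.
  apply/negP => /eqP /finj e; move: hab; rewrite -ea -eb e ltnn //.
by apply/negP => h; have := mono _ _ h; rewrite ea eb ltnNge (ltnW hab).
Qed.

Lemma sgn_sq n (s : 'S_n) m : ((-1) ^+ s * (-1) ^+ s : {mpoly int[m]}) = 1.
Proof. by case: (odd_perm s); rewrite ?expr1 ?expr0 ?mulr1 ?mulrNN ?mul1r. Qed.

Lemma Hk_perm n k (R S : 'I_k -> nat) (s t : 'S_k) :
  Hk n R S = ((-1) ^+ s * (-1) ^+ t : int)%:~R * Hk n (fun i => R (s i)) (fun j => S (t j)).
Proof.
have -> : Hk n (fun i => R (s i)) (fun j => S (t j)) =
  \det (row_perm s (col_perm t (\matrix_(i, j) hz n ((R i + S j).+1)%:Z))).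
  by rewrite /Hk; congr (\det _); apply/matrixP => i j; rewrite !mxE.
rewrite row_permE col_permE !det_mulmx !det_perm odd_permV -/(Hk n R S).
rewrite intrM !rmorphXn /= rmorphN1.
set a := (-1) ^+ s; set b := (-1) ^+ t; set D := Hk n R S.
have -> : a * b * (a * (D * b)) = (a * a) * (b * b) * D by ring.
by rewrite !sgn_sq !mul1r.
Qed.

Lemma Hk_noninjR n k (R S : 'I_k -> nat) : ~~ injectiveb R -> Hk n R S = 0.
Proof.
move/injectiveP; case/boolP: [exists i, exists j, (i != j) && (R i == R j)].
  case/existsP => i /existsP [j /andP [hij /eqP e]] _.
  apply: (determinant_alternate hij) => l; rewrite !mxE e //.
rewrite negb_exists => /forallP H []; move=> i j e; apply/eqP; apply: contraT => hij.
by move: (H i); rewrite negb_exists => /forallP /(_ j); rewrite hij e eqxx.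
Qed.

Lemma Hk_noninjS n k (R S : 'I_k -> nat) : ~~ injectiveb S -> Hk n R S = 0.
Proof.
move=> h; rewrite /Hk -det_tr.
have -> : (\matrix_(i, j) hz n ((R i + S j).+1)%:Z)^T = \matrix_(i, j) hz n ((S i + R j).+1)%:Z.
  by apply/matrixP => i j; rewrite !mxE addnC.
exact: (Hk_noninjR n R h).
Qed.

Lemma incr_gap k (f : 'I_k -> nat) : (forall a b : 'I_k, (a < b)%N -> (f a < f b)%N) ->
  forall a b : 'I_k, (a <= b)%N -> (f a + (b - a) <= f b)%N.
Proof.
move=> hf a b hab.
suff H : forall d (b : 'I_k), (b - a = d)%N -> (a <= b)%N -> (f a + d <= f b)%N by apply: H.
elim=> [|d IH] b' hd hab'.
  have -> : b' = a by apply/val_inj => /=; lia.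
  by rewrite addn0.
have hb : (b'.-1 < k)%N by have := ltn_ord b'; lia.
have h1 := IH (Ordinal hb) ltac:(rewrite /=; lia) ltac:(rewrite /=; lia).
have h2 := hf (Ordinal hb) b' ltac:(rewrite /=; lia).
lia.
Qed.

Lemma mk_legal n k c (u v : 'I_k -> nat) : (0 < k)%N ->
 (forall a b : 'I_k, (a < b)%N -> (u b < u a)%N) ->
 (forall a b : 'I_k, (a < b)%N -> (v a < v b)%N) ->
 (forall a, u a <= n - c)%N -> (forall b, v b < c)%N ->
 exists lam mu, legal n k c lam mu /\ skewS n k lam mu = Hk n u v.
Proof.
case: k u v => [//|k] u v _ hu hv uB vB.
pose V := v ord_max.
have gap : forall b : 'I_k.+1, (v b + (k - b) <= V)%N.
  move=> b; apply: (incr_gap hv); rewrite /=; have := ltn_ord b; lia.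
pose mu := mkseq (fun b => V - v (inord b) - (k - b))%N k.+1.
pose lam := mkseq (fun a => nth 0%N mu a + u (inord a) + v (inord a) + 1)%N k.+1.
have emu : forall b : 'I_k.+1, nth 0%N mu b = (V - v b - (k - b))%N.
  by move=> b; rewrite nth_mkseq // inord_val.
have elam : forall a : 'I_k.+1, nth 0%N lam a = (V - v a - (k - a) + u a + v a + 1)%N.
  by move=> a; rewrite nth_mkseq // inord_val emu.
have eS : skewS n k.+1 lam mu = Hk n u v.
  rewrite /skewS /Hk; congr (\det _); apply/matrixP => i j; rewrite !mxE.
  congr (hz n _); rewrite elam emu.
  have := gap i; have := gap j; have := ltn_ord i; have := ltn_ord j; lia.
exists lam, mu; split => //; split.
- apply/and3P; split; first by rewrite size_mkseq.
    apply/(sortedP 0%N) => i; rewrite size_mkseq => hi.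
    have hi1 : (i < k.+1)%N by lia.
    have := elam (Ordinal hi1); have := elam (Ordinal hi) => /= -> ->.
    have := gap (Ordinal hi1); have := gap (Ordinal hi) => /=.
    have := hu (Ordinal hi1) (Ordinal hi) (ltnSn _) => /=; lia.
  apply/allP => x /mapP [a]; rewrite mem_iota => /andP [_ ha] ->; lia.
- apply/and4P; split; first by rewrite size_mkseq.
  + apply/(sortedP 0%N) => i; rewrite size_mkseq => hi.
    have hi1 : (i < k.+1)%N by lia.
    have := emu (Ordinal hi1); have := emu (Ordinal hi) => /= -> ->.
    have := gap (Ordinal hi1); have := gap (Ordinal hi) => /=.
    have := hv (Ordinal hi1) (Ordinal hi) (ltnSn _) => /=; lia.
  + apply/forallP => i; rewrite emu elam; lia.
  + by have := emu ord_max => /= ->; rewrite subnn subn0 subnn.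
- have hr : forall a : 'I_k.+1, (n - c - u a < (n - c).+1)%N by move=> a; lia.
  exists (fun a => Ordinal (hr a)), (fun b => Ordinal (vB b)); split.
  + move=> a b hab /=; have := hu _ _ hab; have := uB a; have := uB b; lia.
  + by move=> a b hab /=; apply: hv.
  rewrite eS /Hk /Amat; congr (\det _); apply/matrixP => i j; rewrite !mxE.
  congr (hz n _); rewrite /=; have := uB i; lia.
Qed.

Lemma lift n k A B p : (k <= A.+1)%N -> inV k A.+1 B p -> @inV n k A B.+1 p.
Proof.
move=> hk; elim => [|z R S q HR HS _ IH]; first exact: inV0.
apply: inV_add => //; apply: inV_scale; apply: step => // j; rewrite ltnS; exact: HS.
Qed.

Lemma chain n k d B p : (0 < k)%N -> (B + d + k <= n)%N ->
  @inV n k (n.-1 - B) B p -> inV k (n.-1 - (B + d)) (B + d) p.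
Proof.
elim: d => [|d IH] hk hb H; first by rewrite addn0.
have := IH hk ltac:(lia) H.
have -> : (n.-1 - (B + d) = (n.-1 - (B + d.+1)).+1)%N by lia.
rewrite addnS; apply: lift; lia.
Qed.

Lemma conv n k c p : (0 < k)%N -> (0 < c)%N -> @inV n k (n - c) c.-1 p ->
  exists s : seq (int * (seq nat * seq nat)),
    (forall t, t \in s -> legal n k c t.2.1 t.2.2) /\
    p = \sum_(t <- s) t.1%:~R * skewS n k t.2.1 t.2.2.
Proof.
move=> hk hc; elim=> [|z R S q HR HS _ [s [hs ->]]].
  by exists [::]; split => //; rewrite big_nil.
case: (boolP (injectiveb R && injectiveb S)) => [/andP [/injectiveP iR /injectiveP iS]|].
  have fi : injective (fun i => n - c - R i)%N.
    by move=> i j e; apply: iR; have := HR i; have := HR j; lia.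
  have [sg hsg] := sort_perm fi.
  have [tg htg] := sort_perm iS.
  have [lam [mu [hl he]]] := @mk_legal n k c (fun i => R (sg i)) (fun j => S (tg j)) hk
    ltac:(move=> a b hab /=; have := hsg a b hab; have := HR (sg a); have := HR (sg b); lia)
    ltac:(move=> a b hab; exact: htg)
    ltac:(move=> a; exact: HR)
    ltac:(move=> b /=; have := HS (tg b); lia).
  exists (((z * ((-1) ^+ sg * (-1) ^+ tg))%R, (lam, mu)) :: s); split.
    move=> t; rewrite inE; case/orP => [/eqP -> //|]; exact: hs.
  by rewrite big_cons /= he (Hk_perm n R S sg tg) mulrA -intrM.
rewrite negb_and => hn; exists s; split => //.
case/orP: hn => hn; first by rewrite Hk_noninjR // mulr0 add0r.
by rewrite Hk_noninjS // mulr0 add0r.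
Qed.

Theorem lemma3 (n k c : nat) :
  (0 < n)%N -> (1 <= k)%N -> (k <= c)%N -> (c.*2 <= n)%N ->
  forall nu : seq nat, legal n k k nu (nseq k 0%N) ->
  exists s : seq (int * (seq nat * seq nat)),
    (forall t, t \in s -> legal n k c t.2.1 t.2.2) /\
    skewS n k nu (nseq k 0%N) = \sum_(t <- s) t.1%:~R * skewS n k t.2.1 t.2.2.
Proof.
move=> n0 k1 kc; rewrite -addnn => c2 nu [_ _ [r [s [hr hs e]]]].
have hv : @inV n k (n.-1 - k.-1) k.-1 (skewS n k nu (nseq k 0%N)).
  rewrite e.
  have -> : \det (\matrix_(i, j) Amat n k (r i) (s j)) =
      Hk n (fun i => n - k - r i)%N (fun j => nat_of_ord (s j)).
    rewrite /Hk /Amat; congr (\det _); apply/matrixP => i j; rewrite !mxE.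
    congr (hz n _); have := ltn_ord (r i); lia.
  apply: inV_gen => [i|j]; first by have := ltn_ord (r i); lia.
  by have := ltn_ord (s j); lia.
have hb : (k.-1 + (c - k) + k <= n)%N by lia.
have := chain k1 hb hv.
have -> : (k.-1 + (c - k) = c.-1)%N by lia.
have -> : (n.-1 - c.-1 = n - c)%N by lia.
apply: conv => //; lia.
Qed.
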